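(* Let $I$ be a resident-minimal instance and $J$ a simple extension of $I$. Then there is a simple and hospital-complete extension $J'$ of $I$ such that $\mathrm{rej}(J)\subseteq\mathrm{rej}(J')$.
   Context: An instance $I$ consists of finite disjoint sets $R$ (residents) and $H$ (hospitals), a positive integer quota $q_h$ for each $h\in H$, for each $r\in R$ a preference list of $r$ (a sequence of distinct members of $H$, not necessarily all), and for each $h\in H$ a preference list of $h$ (a sequence of distinct members of $R$). A list is complete if it contains every member of the opposite side; an instance is hospital-complete if every hospital's list is complete. A match is a pair $(r,h)\in R\times H$. For a set $M$ of matches, $\mathrm{res}_h M=\{r:(r,h)\in M\}$, $\mathrm{res}\,M=\{r:(r,h)\in M\text{ for some }h\}$. $J$ is an extension of $I$ (same $R,H$, quotas) if every list of $J$ has the corresponding list of $I$ as a prefix. An event is $(r,h)^+$ (proposal) or $(r,h)^-$ (rejection). For an event sequence $\sigma$, $\mathrm{prop}(\sigma)$, $\mathrm{rej}(\sigma)$ are the sets of matches proposed/rejected in $\sigma$ and $\mathrm{tent}(\sigma)=\mathrm{prop}(\sigma)\setminus\mathrm{rej}(\sigma)$. A match $(r,h)\in M$ is ousted from $M$ in $I$ if the list of $h$ in $I$ contains at least $q_h$ residents of $\mathrm{res}_h M$ and either $r$ is not on it or $r$ is preceded on it by at least $q_h$ residents of $\mathrm{res}_h M$. $I$-feasible sequences: the empty sequence is $I$-feasible; if $\sigma$ is $I$-feasible then $\sigma+(r,h)^+$ is $I$-feasible if $r\notin\mathrm{res}\,\mathrm{tent}(\sigma)$, $(r,h)\notin\mathrm{prop}(\sigma)$,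 $h$ is on the list of $r$ in $I$ and $(r,h')\in\mathrm{rej}(\sigma)$ for every $h'$ preceding $h$ on it; and $\sigma+(r,h)^-$ is $I$-feasible if $(r,h)$ is ousted from $\mathrm{prop}(\sigma)$ in $I$ and $(r,h)\notin\mathrm{rej}(\sigma)$. All maximal $I$-feasible sequences contain the same events; $\mathrm{prop}(I),\mathrm{rej}(I)$ denote $\mathrm{prop}(\sigma),\mathrm{rej}(\sigma)$ for any maximal $I$-feasible $\sigma$. $I$ is resident-minimal if $\mathrm{prop}(I)$ equals the set of matches $(r,h)$ with $h$ on the list of $r$ in $I$. An extension $J$ of $I$ is simple if $(\mathrm{prop}(J)\setminus\mathrm{prop}(I))\cap(\mathrm{rej}(J)\setminus\mathrm{rej}(I))=\emptyset$. *)

(* Defs.v *)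
From mathcomp Require Import all_boot.
Set Implicit Arguments. Unset Strict Implicit. Unset Printing Implicit Defensive.

Section HR.
Variables (R H : finType).

Record instance := Instance {
  quota : H -> nat;
  quota_pos : forall h, 0 < quota h;
  rlist : R -> seq H;
  rlist_uniq : forall r, uniq (rlist r);
  hlist : H -> seq R;
  hlist_uniq : forall h, uniq (hlist h)
}.

Definition match_t := (R * H)%type.

Definition extension (I J : instance) : Prop :=
  (forall h, quota J h = quota I h) /\
  (forall r, prefix (rlist I r) (rlist J r)) /\
  (forall h, prefix (hlist I h) (hlist J h)).

Definition hospital_complete (I : instance) : Prop :=
  forall h r, r \in hlist I h.

Inductive event := Prop_ev of match_t | Rej_ev of match_t.

Definition is_prop_of (m : match_t) (e : event) : bool :=
  if e is Prop_ev m' then m' == m else false.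
Definition is_rej_of (m : match_t) (e : event) : bool :=
  if e is Rej_ev m' then m' == m else false.

Definition propS (s : seq event) : {set match_t} := [set m | has (is_prop_of m) s].
Definition rejS (s : seq event) : {set match_t} := [set m | has (is_rej_of m) s].
Definition tentS (s : seq event) : {set match_t} := propS s :\: rejS s.

Definition in_res (M : {set match_t}) (r : R) : bool := [exists h, (r, h) \in M].

Definition ousted (I : instance) (M : {set match_t}) (m : match_t) : bool :=
  let: (r, h) := m in
  let L := hlist I h in
  let inM := fun r' => (r', h) \in M in
  (quota I h <= count inM L) &&
  ((r \notin L) || (quota I h <= count inM (take (index r L) L))).

Definition can_propose (I : instance) (s : seq event) (m : match_t) : bool :=
  let: (r, h) := m in
  [&& ~~ in_res (tentS s) r, m \notin propS s, h \in rlist I r &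
      all (fun h' => (r, h') \in rejS s) (take (index h (rlist I r)) (rlist I r))].

Definition can_reject (I : instance) (s : seq event) (m : match_t) : bool :=
  ousted I (propS s) m && (m \notin rejS s).

Definition step_ok (I : instance) (s : seq event) (e : event) : bool :=
  match e with
  | Prop_ev m => can_propose I s m
  | Rej_ev m => can_reject I s m
  end.

Inductive feasible (I : instance) : seq event -> Prop :=
  | feasible_nil : feasible I [::]
  | feasible_rcons s e : feasible I s -> step_ok I s e -> feasible I (rcons s e).

Definition maximal (I : instance) (s : seq event) : Prop :=
  feasible I s /\ forall e, ~ feasible I (rcons s e).

(* prop(I), rej(I): matches proposed/rejected in a maximal I-feasible sequence
   (all maximal sequences contain the same events, so this is well defined). *)
Definition propI (I : instance) (m : match_t) : Prop :=
  exists s, maximal I s /\ m \in propS s.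
Definition rejI (I : instance) (m : match_t) : Prop :=
  exists s, maximal I s /\ m \in rejS s.

Definition resident_minimal (I : instance) : Prop :=
  forall r h, propI I (r, h) <-> h \in rlist I r.

Definition simple_ext (I J : instance) : Prop :=
  extension I J /\
  forall m, ~ ((propI J m /\ ~ propI I m) /\ (rejI J m /\ ~ rejI I m)).

End HR.

(* Main.v *)
Require Import Defs.
From mathcomp Require Import all_boot zify.
From Stdlib Require Import Classical.
Set Implicit Arguments. Unset Strict Implicit. Unset Printing Implicit Defensive.

Section Proofs.
Variables (R H : finType).
Implicit Types (K : instance R H) (M W : {set match_t R H}) (s : seq (event R H)).

Definition PX K W : {set match_t R H} :=
  [set m | (m.2 \in rlist K m.1) &&
     all (fun h' => (m.1, h') \in W) (take (index m.2 (rlist K m.1)) (rlist K m.1))].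

Lemma PX_mono K W W' : W \subset W' -> PX K W \subset PX K W'.
Proof.
move=> /subsetP sWW'; apply/subsetP=> [[r h]]; rewrite !inE /= => /andP[-> /allP A].
by apply/allP=> x /A /sWW'.
Qed.

Lemma propS_P s m : propS (rcons s (Prop_ev m)) = m |: propS s.
Proof.
apply/setP=> x; rewrite !inE has_rcons /=; congr (_ || _); by rewrite eq_sym.
Qed.
Lemma propS_R s m : propS (rcons s (Rej_ev m)) = propS s.
Proof. by apply/setP=> x; rewrite !inE has_rcons /=. Qed.
Lemma rejS_P s m : rejS (rcons s (Prop_ev m)) = rejS s.
Proof. by apply/setP=> x; rewrite !inE has_rcons /=. Qed.
Lemma rejS_R s m : rejS (rcons s (Rej_ev m)) = m |: rejS s.
Proof.
apply/setP=> x; rewrite !inE has_rcons /=; congr (_ || _); by rewrite eq_sym.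
Qed.

Lemma ousted_mono K M M' m : M \subset M' -> ousted K M m -> ousted K M' m.
Proof.
move=> /subsetP sMM'; case: m => r h /=.
have C : forall l, count (fun r' => (r', h) \in M) l <= count (fun r' => (r', h) \in M') l.
  by move=> l; apply: sub_count => x /sMM'.
case/andP=> c1 c2; apply/andP; split; first exact: leq_trans c1 (C _).
case/orP: c2 => [->//|c2]; apply/orP; right; exact: leq_trans c2 (C _).
Qed.

Lemma prefix_idx (T : eqType) (l1 l2 : seq T) x : prefix l1 l2 -> x \in l1 ->
  index x l2 = index x l1 /\ take (index x l2) l2 = take (index x l1) l1.
Proof.
case/prefixP=> t -> xin; rewrite index_cat xin; split=> //.
by rewrite take_cat index_mem xin.
Qed.

Lemma ousted_ext K K' M r h : quota K' h = quota K h -> prefix (hlist K h) (hlist K' h) ->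
  ousted K M (r, h) -> ousted K' M (r, h).
Proof.
rewrite /ousted => -> /prefixP [t ->].
set L := hlist K h; set f := (fun r' => (r', h) \in M).
case/andP=> c1 c2; apply/andP; split; first by rewrite count_cat; apply: leq_trans c1 (leq_addr _ _).
case/orP: c2 => c2; apply/orP; right.
  rewrite index_cat (negbTE c2) take_cat ltnNge leq_addr /= count_cat.
  exact: leq_trans c1 (leq_addr _ _).
have [rin|rnin] := boolP (r \in L).
  by rewrite index_cat rin take_cat index_mem rin.
rewrite index_cat (negbTE rnin) take_cat ltnNge leq_addr /= count_cat.
apply: leq_trans (leq_addr _ _); apply: leq_trans c2 _.
by rewrite (memNindex rnin) take_size.
Qed.

Lemma feasible_inv K s e : feasible K (rcons s e) -> feasible K s /\ step_ok K s e.
Proof.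
move Et: (rcons s e) => t F; case: F Et => [|s0 e0 F0 S0].
  by case: s.
by move=> /rcons_inj [-> ->].
Qed.

Lemma INV K s : feasible K s -> propS s \subset PX K (rejS s).
Proof.
elim=> [|s0 e F IH S]; first by apply/subsetP=> x; rewrite inE.
case: e S => m S.
- rewrite propS_P rejS_P; apply/subsetP=> x; rewrite in_setU1 => /orP[/eqP->|xin].
    move: S; case: m => r h /= /and4P[_ _ hin A]; by rewrite inE /= hin A.
  exact: (subsetP IH).
- rewrite propS_R rejS_R; apply: subset_trans IH (PX_mono _ _).
  by apply/subsetP=> x xi; rewrite inE xi orbT.
Qed.

Definition prefixpt K W := forall m, ousted K (PX K W) m -> m \in W.

Lemma UB K W s : prefixpt K W -> feasible K s -> rejS s \subset W.
Proof.
move=> PW; elim=> [|s0 e F IH S]; first by apply/subsetP=> x; rewrite inE.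
case: e S => m S.
- by rewrite rejS_P.
- rewrite rejS_R; apply/subsetP=> x; rewrite in_setU1 => /orP[/eqP->|]; last exact: (subsetP IH).
  apply: PW; move: S => /andP[O _]; apply: ousted_mono O.
  exact: subset_trans (INV F) (PX_mono _ IH).
Qed.

Lemma UB_rej K W m : prefixpt K W -> rejI K m -> m \in W.
Proof. by move=> PW [s [[F _] min]]; exact: (subsetP (UB PW F)). Qed.

Lemma UB_prop K W m : prefixpt K W -> propI K m -> m \in PX K W.
Proof.
move=> PW [s [[F _] min]]; apply: (subsetP (PX_mono K (UB PW F))).
exact: (subsetP (INV F)).
Qed.


Definition noskip K s := forall r h h', (r, h) \in propS s ->
  h' \in take (index h (rlist K r)) (rlist K r) -> (r, h') \in propS s.

Lemma card_dec (T : finType) (A : {set T}) m : m \notin A -> #|~: (m |: A)| < #|~: A|.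
Proof.
move=> mA; rewrite [#|~: (m |: A)|]cardsCs [#|~: A|]cardsCs !setCK cardsU1 mA /= add1n.
have : #|m |: A| <= #|T| by apply: max_card.
rewrite cardsU1 mA /= add1n => lt.
by rewrite subnS prednK ?subn_gt0 //.
Qed.

Definition meas s := #|~: propS s| + #|~: rejS s|.

Lemma step_meas K s e : step_ok K s e -> meas (rcons s e) < meas s.
Proof.
rewrite /meas; case: e => [[r h]|m] /=.
- case/and4P=> _ nin _ _; rewrite propS_P rejS_P ltn_add2r; exact: card_dec.
- case/andP=> _ nin; rewrite propS_R rejS_R ltn_add2l; exact: card_dec.
Qed.

Lemma CL_ext K n s : meas s < n -> feasible K s -> noskip K s ->
  exists t, maximal K t /\ noskip K t.
Proof.
elim: n s => [//|n IH] s Hm F NS.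
case: (classic (exists e, step_ok K s e /\ noskip K (rcons s e))) => [[e [S NS']]|NE].
  apply: (IH (rcons s e)) => //; last exact: feasible_rcons.
  exact: leq_trans (step_meas S) Hm.
exists s; split=> //; split=> // e /feasible_inv [_ S]; apply: NE.
case: e S => [[r h]|m] S.
- move: (S) => /= /and4P [fr nin hin A].
  set l := rlist K r.
  set p := (fun h' => (r, h') \notin propS s).
  set i := find p l; set h0 := nth h l i.
  have hasp : has p l by apply/hasP; exists h.
  have il : i < size l by rewrite -has_find.
  have ph0 : p h0 by apply: nth_find.
  have ile : i <= index h l.
    rewrite leqNgt; apply/negP=> lt.
    have := before_find h lt; rewrite nth_index // /p; by rewrite nin.
  have ih0 : index h0 l = i by apply: index_uniq => //; exact: rlist_uniq.
  have h0in : h0 \in l by exact: mem_nth.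
  exists (Prop_ev (r, h0)); split.
    rewrite /=; apply/and4P; split => //; rewrite ih0; apply/allP=> x xin; apply: (allP A).
    by rewrite -(take_takel _ ile) in xin; exact: mem_take xin.
  move=> r' h' h''; rewrite propS_P in_setU1 => /orP [/eqP [-> ->]|hin'] hin''.
    rewrite in_setU1; apply/orP; right.
    rewrite -/l ih0 in hin''.
    have xl : h'' \in l by exact: mem_take hin''.
    have := before_find h (index_ltn hin''); rewrite nth_index // /p.
    by move/negbT; rewrite negbK.
  by rewrite in_setU1 (NS _ _ _ hin' hin'') orbT.
- by exists (Rej_ev m); split=> //; rewrite /noskip propS_R.
Qed.

Lemma CL K : exists t, maximal K t /\ prefixpt K (rejS t) /\
  (forall m, m \in PX K (rejS t) -> m \in propS t).
Proof.
have NS0 : noskip K [::] by move=> r h h'; rewrite inE.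
have [t [[F Mx] NS]] := @CL_ext K (meas [::]).+1 [::] (ltnSn _) (feasible_nil K) NS0.
have sub : forall m, m \in PX K (rejS t) -> m \in propS t.
  move=> [r h]; rewrite inE /= => /andP [hin A].
  apply/negPn/negP=> nin.
  have [fr|] := boolP (in_res (tentS t) r).
    case/existsP: fr => h1; rewrite inE => /andP [nrej pr].
    have := subsetP (INV F) _ pr; rewrite inE /= => /andP [h1in A1].
    have neq : h1 != h by apply: contraNneq nin => <-.
    have : index h1 (rlist K r) != index h (rlist K r).
      by apply: contra neq => /eqP E; rewrite -(nth_index h h1in) E nth_index.
    rewrite neq_ltn => /orP [lt|lt].
      by move: nrej; rewrite (allP A) //= in_take.
    by move: nin; rewrite (NS _ _ _ pr) // in_take.
  move=> fr; apply: (Mx (Prop_ev (r, h))); apply: feasible_rcons => //.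
  by rewrite /= fr nin hin A.
exists t; split; first by [].
split=> // m O; apply/negPn/negP=> nin; apply: (Mx (Rej_ev m)).
apply: feasible_rcons => //; apply/andP; split => //.
apply: ousted_mono O; exact/subsetP.
Qed.


Lemma take_find_mem (T : eqType) (l : seq T) (k : pred T) x : uniq l ->
  (forall x y, x \in l -> y \in take (index x l) l -> k x -> k y) ->
  k x -> x \in l -> x \in take (find (predC k) l) l.
Proof.
move=> ul dc kx xl; rewrite in_take //; rewrite ltnNge; apply/negP=> le.
have il : find (predC k) l < size l by apply: leq_ltn_trans le _; rewrite index_mem.
have hs : has (predC k) l by rewrite has_find.
have := nth_find x hs; rewrite /= => nk; apply: (negP nk).
move: le; rewrite leq_eqVlt => /orP [/eqP E|lt].
  by rewrite E nth_index.
apply: (dc x) => //; rewrite in_take ?mem_nth //.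
by rewrite index_uniq.
Qed.

Lemma take_find_keep (T : eqType) (l : seq T) (k : pred T) x :
  x \in take (find (predC k) l) l -> k x.
Proof.
move=> xin; have xl : x \in l by exact: mem_take xin.
have := before_find x (index_ltn xin); rewrite nth_index //= => /negbT; by rewrite negbK.
Qed.


Lemma mem_prefix (T : eqType) (l1 l2 : seq T) x : prefix l1 l2 -> x \in l1 -> x \in l2.
Proof. by case/prefixP=> t -> xin; rewrite mem_cat xin. Qed.

Lemma count_take_le (T : Type) (a : pred T) n l : count a (take n l) <= count a l.
Proof. by rewrite -[X in _ <= count _ X](cat_take_drop n) count_cat leq_addr. Qed.

Lemma main (I J : instance R H) : resident_minimal I -> simple_ext I J ->
  exists J' : instance R H,
    simple_ext I J' /\ hospital_complete J' /\ (forall m, rejI J m -> rejI J' m).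
Proof.
move=> Hmin [[Eq [Er Eh]] Hs].
have [sJ [MJ [PJ SJ]]] := CL J.
set X := rejS sJ in PJ SJ; set P := PX J X in SJ.
have rejJ : forall m, m \in X -> rejI J m by move=> m mX; exists sJ.
have propJ : forall m, m \in P -> propI J m by move=> m mP; exists sJ; split=> //; exact: SJ.
have PXIJ : forall W, PX I W \subset PX J W.
  move=> W; apply/subsetP=> [[r h]]; rewrite !inE /= => /andP [hin A].
  have [-> ->] := prefix_idx (Er r) hin; by rewrite A (mem_prefix (Er r) hin).
have PI : prefixpt I X.
  move=> [r h] O; apply: PJ; apply: ousted_ext (Eq h) (Eh h) _.
  exact: ousted_mono (PXIJ X) O.
set keep := fun r h => ((r, h) \in P) &&
   ~~ [&& h \notin rlist I r, r \notin hlist J h & (r, h) \notin X].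
pose rl' := fun r => take (find (predC (keep r)) (rlist J r)) (rlist J r).
pose hl' := fun h => hlist J h ++ [seq x <- enum R | x \notin hlist J h].
have rl'u : forall r, uniq (rl' r) by move=> r; apply: take_uniq; exact: rlist_uniq.
have hl'u : forall h, uniq (hl' h).
  move=> h; rewrite cat_uniq hlist_uniq filter_uniq ?enum_uniq // andbT /=.
  by apply/hasPn=> x; rewrite mem_filter => /andP [].
pose J' := @Instance R H (quota I) (quota_pos I) rl' rl'u hl' hl'u.
have K1 : forall r h, h \in rl' r -> keep r h by move=> r h; apply: take_find_keep.
have K2 : forall r h, keep r h -> h \in rl' r.
  move=> r h kh; apply: take_find_mem => //; first exact: rlist_uniq.
    move=> x y xl yx /andP [xP _].
    move: xP; rewrite inE /= => /andP [_ /allP A].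
    have yX : (r, y) \in X by exact: A.
    rewrite /keep yX !andbF andbT inE /= (mem_take yx) /=.
    apply/allP=> z zin; apply: A.
    move: zin; rewrite -(take_takel _ (ltnW (index_ltn yx))); exact: mem_take.
  by move: kh => /andP [/[!inE] /andP [] ].

have K3 : forall r h, h \in rl' r -> take (index h (rl' r)) (rl' r) = take (index h (rlist J r)) (rlist J r).
  move=> r h hin; have [E1 E2] := prefix_idx (prefix_take _ _) hin; by rewrite -E2.
have KI : forall r x, x \in rlist I r -> keep r x.
  move=> r x xin; have := UB_prop PI ((Hmin r x).2 xin); rewrite inE /= => /andP [_ A].
  rewrite /keep xin /= andbT inE /= (mem_prefix (Er r) xin) /=.
  by have [-> ->] := prefix_idx (Er r) xin.
have ExtJ' : extension I J'.
  split; first by [].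
  split=> [r|h] /=.
    rewrite /rl'; case/prefixP: (Er r) => t ->.
    have HF : has (predC (keep r)) (rlist I r) = false.
      by apply/negbTE/hasPn=> x /KI /= ->.
    rewrite find_cat HF take_cat ltnNge leq_addr /=; exact: prefix_prefix.
  apply: prefix_trans (Eh h) _; exact: prefix_prefix.
have CJ' : hospital_complete J'.
  move=> h r; rewrite /= mem_cat mem_filter mem_enum andbT; by case: (r \in hlist J h).
have [s' [M' [P' S']]] := CL J'.
have Zinc : forall s, feasible J s -> rejS s \subset rejS s'.
  move=> s; elim=> [|s0 e F IH S]; first by apply/subsetP=> x; rewrite inE.
  case: e S => m S; first by rewrite rejS_P.
  rewrite rejS_R; apply/subsetP=> x; rewrite in_setU1 => /orP [/eqP ->|]; last exact: (subsetP IH).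
  move: S => /andP [O _]; apply: P'.
  have propP : propS s0 \subset P := subset_trans (INV F) (PX_mono J (UB PJ F)).
  pose Mk := [set x in propS s0 | keep x.1 x.2].
  have MkS : Mk \subset PX J' (rejS s').
    apply/subsetP=> [[r h]]; rewrite inE /= => /andP [pin kh].
    have hin := K2 _ _ kh.
    rewrite inE /= hin /= K3 //.
    have := subsetP (INV F) _ pin; rewrite inE /= => /andP [_ /allP A].
    apply/allP=> z zin; exact: (subsetP IH) (A z zin).
  case: m O => r0 h0 O.
  have OM : ousted J Mk (r0, h0).
    have EC : forall l, {subset l <= hlist J h0} ->
      count (fun r' => (r', h0) \in Mk) l = count (fun r' => (r', h0) \in propS s0) l.
      move=> l sl; apply: eq_in_count => y /sl xL; rewrite inE /=.
      case pin: ((y, h0) \in propS s0) => //=.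
      by rewrite /keep (subsetP propP _ pin) /= xL /= andbF.
    move: O; rewrite /ousted.
    rewrite (EC (hlist J h0)) // (EC (take _ (hlist J h0))) //.
    by move=> y /mem_take.
  apply: ousted_mono MkS _; apply: ousted_ext OM.
    by rewrite /= Eq.
  exact: prefix_prefix.
have RJ : forall m, rejI J m -> rejI J' m.
  move=> m [s [[F Mx] ms]]; exists s'; split=> //; exact: (subsetP (Zinc s F)).
pose E := [set y : match_t R H | (y.1 \notin hlist J y.2) &&
   (count (fun x => (x, y.2) \in P) (hlist J y.2) < quota I y.2)].
pose W := X :|: E.
have PXW : forall y, y \in PX J' W -> keep y.1 y.2.
  by move=> [r h]; rewrite inE /= => /andP [/K1].
have PW : prefixpt J' W.
  move=> [r h] O.
  have OP : ousted J' P (r, h).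
    apply: ousted_mono O; apply/subsetP=> [[y1 y2]] /PXW /andP [] //.
  move: OP; rewrite /ousted /= /hl' in_setU => /andP [c1 c2].
  have [rin|rnin] := boolP (r \in hlist J h).
    apply/orP; left; apply: PJ.
    move: c2; rewrite index_cat rin take_cat index_mem rin mem_cat rin /= => c2.
    rewrite /ousted Eq rin /= c2 andbT.
    exact: leq_trans c2 (count_take_le _ _ _).
  have [big|small] := leqP (quota I h) (count (fun x => (x, h) \in P) (hlist J h)).
    by apply/orP; left; apply: PJ; rewrite /ousted Eq big rnin.
  by apply/orP; right; rewrite inE /= rnin small.
exists J'; split; last by split.
split; first exact: ExtJ'.
move=> [r h] [[pJ' npI] [rJ' nrI]].
have mk := PXW _ (UB_prop PW pJ').
have mW := UB_rej PW rJ'.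
have hnI : h \notin rlist I r by apply/negP => hI; apply: npI; exact: (Hmin r h).2 hI.
have mX : (r, h) \in X.
  move: mW; rewrite in_setU => /orP [//|]; rewrite inE /= => /andP [rn _].
  by move: mk => /andP [_]; rewrite hnI rn /= negbK.
apply: (Hs (r, h)); split; split => //.
  by apply: propJ; move: mk => /andP [].
exact: rejJ.
Qed.

End Proofs.

Theorem proposition5 (R H : finType) (I J : instance R H) :
  resident_minimal I -> simple_ext I J ->
  exists J' : instance R H,
    simple_ext I J' /\ hospital_complete J' /\
    (forall m, rejI J m -> rejI J' m).
Proof. exact: main. Qed.
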